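(* Let $\mathcal L_0$ be a recursive language, and $\mathcal L_1,\mathcal L_2$ recursive extensions of $\mathcal L_0$ with $\mathcal L_1\cap\mathcal L_2=\mathcal L_0$. Let $T_0$ be a complete first-order $\mathcal L_0$-theory, and for $i=1,2$ let $T_i$ be a first-order $\mathcal L_i$-theory and $p_i(\bar x)$ an $\mathcal L_i$-type. If $\mathrm{Con}_{\mathrm{sat}}(T_1+p_1{\uparrow}/T_0)$ and $\mathrm{Con}_{\mathrm{sat}}(T_2+p_2{\uparrow}/T_0)$, then there is a countable model of $T_0+T_1+T_2+p_1{\uparrow}+p_2{\uparrow}$.
   Context: A ''type'' $p(\bar x)$ is any set of first-order formulas with free variables among $\bar x$; $p{\uparrow}$ is the $\mathcal L_{\omega_1\omega}$-sentence $\forall\bar x\bigvee_{\psi\in p}\neg\psi(\bar x)$ expressing that $p$ is omitted. For a first-order theory $T_0$ in $\mathcal L$ and a (possibly non-first-order) theory $S$ in an extension $\mathcal L^+$, $\mathrm{Con}_{\mathrm{sat}}(S/T_0)$ means there is a model of $T_0+S$ whose $\mathcal L$-reduct is $\omega$-saturated. *)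

(* Defs.v *)
From Stdlib Require Import List Arith.
Import ListNotations.

Inductive rec_code : Type :=
| RZero : rec_code
| RSucc : rec_code
| RProj : nat -> rec_code
| RComp : rec_code -> list rec_code -> rec_code
| RPrim : rec_code -> rec_code -> rec_code
| RMu   : rec_code -> rec_code.

Inductive rec_eval : rec_code -> list nat -> nat -> Prop :=
| ev_zero v : rec_eval RZero v 0
| ev_succ v : rec_eval RSucc v (S (nth 0 v 0))
| ev_proj i v : rec_eval (RProj i) v (nth i v 0)
| ev_comp f gs v w y :
    rec_evals gs v w -> rec_eval f w y -> rec_eval (RComp f gs) v y
| ev_prim0 g h v y : rec_eval g v y -> rec_eval (RPrim g h) (0 :: v) y
| ev_primS g h n v y z :
    rec_eval (RPrim g h) (n :: v) y -> rec_eval h (n :: y :: v) z ->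
    rec_eval (RPrim g h) (S n :: v) z
| ev_mu f v n :
    rec_eval f (n :: v) 0 ->
    (forall m, m < n -> exists k, rec_eval f (m :: v) (S k)) ->
    rec_eval (RMu f) v n
with rec_evals : list rec_code -> list nat -> list nat -> Prop :=
| evs_nil v : rec_evals [] v []
| evs_cons g gs v y ys :
    rec_eval g v y -> rec_evals gs v ys -> rec_evals (g :: gs) v (y :: ys).

Definition recursive_set (A : nat -> Prop) : Prop :=
  exists f : rec_code, forall n,
    (A n -> rec_eval f [n] 1) /\ (~ A n -> rec_eval f [n] 0).

Inductive symbol : Type :=
| FunSym (name arity : nat)
| RelSym (name arity : nat).

Definition cpair (x y : nat) : nat := (x + y) * (x + y + 1) / 2 + y.

Definition symbol_code (s : symbol) : nat :=
  match s with
  | FunSym f n => cpair 0 (cpair f n)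
  | RelSym r n => cpair 1 (cpair r n)
  end.

Definition language := symbol -> Prop.

Definition recursive_language (L : language) : Prop :=
  recursive_set (fun c => exists s, L s /\ symbol_code s = c).

Inductive term : Type :=
| Var (v : nat)
| App (f : nat) (args : list term).

Inductive formula : Type :=
| Eq (t u : term)
| Rel (r : nat) (args : list term)
| Neg (phi : formula)
| And (phi psi : formula)
| Ex (v : nat) (phi : formula).

Fixpoint term_in (L : language) (t : term) : Prop :=
  match t with
  | Var _ => True
  | App f args =>
      L (FunSym f (length args)) /\
      (fix go (l : list term) : Prop :=
         match l with [] => True | t' :: l' => term_in L t' /\ go l' end) args
  end.

Definition terms_in (L : language) (l : list term) : Prop :=
  forall t, In t l -> term_in L t.

Fixpoint formula_in (L : language) (phi : formula) : Prop :=
  match phi with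
  | Eq t u => term_in L t /\ term_in L u
  | Rel r args => L (RelSym r (length args)) /\ terms_in L args
  | Neg p => formula_in L p
  | And p q => formula_in L p /\ formula_in L q
  | Ex _ p => formula_in L p
  end.

Fixpoint term_vars (t : term) : list nat :=
  match t with
  | Var v => [v]
  | App _ args => flat_map term_vars args
  end.

Fixpoint free (v : nat) (phi : formula) : Prop :=
  match phi with
  | Eq t u => In v (term_vars t) \/ In v (term_vars u)
  | Rel _ args => In v (flat_map term_vars args)
  | Neg p => free v p
  | And p q => free v p \/ free v q
  | Ex w p => v <> w /\ free v p
  end.

Definition sentence (phi : formula) : Prop := forall v, ~ free v phi.

(* A structure interprets every symbol; the interpretation of the function
   symbol (f, n) is [funs f] on argument lists of length n (similarly for
   relations).  The L-reduct of a structure is obtained by only looking at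
   L-formulas. *)
Record structure : Type := {
  dom : Type;
  funs : nat -> list dom -> dom;
  rels : nat -> list dom -> Prop
}.

Fixpoint teval (M : structure) (s : nat -> dom M) (t : term) : dom M :=
  match t with
  | Var v => s v
  | App f args => funs M f (map (teval M s) args)
  end.

Definition upd {A : Type} (s : nat -> A) (v : nat) (a : A) : nat -> A :=
  fun w => if Nat.eqb w v then a else s w.

Fixpoint sat (M : structure) (s : nat -> dom M) (phi : formula) : Prop :=
  match phi with
  | Eq t u => teval M s t = teval M s u
  | Rel r args => rels M r (map (teval M s) args)
  | Neg p => ~ sat M s p
  | And p q => sat M s p /\ sat M s q
  | Ex v p => exists a : dom M, sat M (upd s v a) p
  end.

Definition theory := formula -> Prop.

Definition theory_in (L : language) (T : theory) : Prop :=
  forall phi, T phi -> formula_in L phi /\ sentence phi.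

Definition is_model (M : structure) (T : theory) : Prop :=
  inhabited (dom M) /\ forall phi, T phi -> forall s, sat M s phi.

Definition entails (T : theory) (phi : formula) : Prop :=
  forall M, is_model M T -> forall s, sat M s phi.

Definition complete_theory (L : language) (T : theory) : Prop :=
  theory_in L T /\
  forall phi, formula_in L phi -> sentence phi ->
    entails T phi \/ entails T (Neg phi).

Definition is_type (L : language) (p : formula -> Prop) : Prop :=
  exists n, forall phi, p phi ->
    formula_in L phi /\ forall v, free v phi -> v < n.

Definition omits (M : structure) (p : formula -> Prop) : Prop :=
  forall s : nat -> dom M, exists phi, p phi /\ ~ sat M s phi.

(* The L-reduct of M is omega-saturated: every set of L-formulas in the
   variable x_0 with parameters from a finite set (assigned to x_1..x_k by
   s) which is finitely satisfiable in M is realised in M. *)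
Definition omega_saturated (L : language) (M : structure) : Prop :=
  forall (k : nat) (s : nat -> dom M) (Sigma : formula -> Prop),
    (forall phi, Sigma phi ->
       formula_in L phi /\ forall v, free v phi -> v <= k) ->
    (forall l : list formula, (forall phi, In phi l -> Sigma phi) ->
       exists b : dom M, forall phi, In phi l -> sat M (upd s 0 b) phi) ->
    exists b : dom M, forall phi, Sigma phi -> sat M (upd s 0 b) phi.

(* Con_sat(S / T0): some model of T0 + S has an omega-saturated L0-reduct.
   S is given semantically as a class of structures. *)
Definition Con_sat (L0 : language) (T0 : theory) (S : structure -> Prop)
  : Prop :=
  exists M, is_model M T0 /\ S M /\ omega_saturated L0 M.

Definition countable_structure (M : structure) : Prop :=
  exists f : dom M -> nat, forall a b, f a = f b -> a = b.

(* Main.v *)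
Require Import Defs.
From Stdlib Require Import List Arith Lia Cantor ClassicalEpsilon ProofIrrelevance.
Import ListNotations.

Fixpoint term_ind' (P : term -> Prop) (HV : forall v, P (Var v))
  (HA : forall f args, Forall P args -> P (App f args)) (t : term) : P t :=
  match t with
  | Var v => HV v
  | App f args => HA f args
      ((fix go (l : list term) : Forall P l :=
          match l with
          | [] => Forall_nil P
          | t' :: l' => Forall_cons t' (term_ind' P HV HA t') (go l')
          end) args)
  end.

Lemma term_in_App L f args :
  term_in L (App f args) <-> L (FunSym f (length args)) /\ Forall (term_in L) args.
Proof.
  simpl. split; intros [H1 H2]; split; auto; clear H1; induction args; simpl in *;
  try constructor; try tauto; inversion H2; subst; tauto.
Qed.

Lemma term_in_mono L L' (HL : forall s, L s -> L' s) t : term_in L t -> term_in L' t.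
Proof.
  induction t as [v|f args IH] using term_ind'; [simpl; auto|].
  rewrite !term_in_App. intros [H1 H2]; split; auto.
  rewrite Forall_forall in *. intros x Hx; apply IH; auto.
Qed.

Lemma formula_in_mono L L' (HL : forall s, L s -> L' s) phi :
  formula_in L phi -> formula_in L' phi.
Proof.
  induction phi; simpl; intuition eauto using term_in_mono.
  unfold terms_in in *; eauto using term_in_mono.
Qed.

Lemma teval_ext M s s' t :
  (forall v, In v (term_vars t) -> s v = s' v) -> teval M s t = teval M s' t.
Proof.
  induction t as [v|f args IH] using term_ind'; simpl; intros H.
  - apply H; auto.
  - f_equal. apply map_ext_in. rewrite Forall_forall in IH. intros a Ha.
    apply IH; auto. intros v Hv; apply H. apply in_flat_map; eauto.
Qed.

Lemma sat_ext M phi : forall s s',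
  (forall v, free v phi -> s v = s' v) -> (sat M s phi <-> sat M s' phi).
Proof.
  induction phi; simpl; intros s s' H.
  - rewrite (teval_ext M s s' t), (teval_ext M s s' u); try tauto; auto.
  - rewrite (map_ext_in (teval M s) (teval M s')); [tauto|].
    intros a Ha; apply teval_ext; intros w Hw; apply H; apply in_flat_map; eauto.
  - rewrite (IHphi s s'); tauto.
  - rewrite (IHphi1 s s'), (IHphi2 s s'); auto; tauto.
  - split; intros [a Ha]; exists a; revert Ha; apply IHphi; intros w Hw;
    unfold upd; destruct (Nat.eqb_spec w v); auto;
    first [apply H; auto | symmetry; apply H; auto].
Qed.

Fixpoint rnt (r : nat -> nat) (t : term) : term :=
  match t with
  | Var v => Var (r v)
  | App f args => App f (map (rnt r) args)
  end.

Fixpoint rn (B : nat) (r : nat -> nat) (phi : formula) : formula :=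
  match phi with
  | Eq t u => Eq (rnt r t) (rnt r u)
  | Rel q args => Rel q (map (rnt r) args)
  | Neg p => Neg (rn B r p)
  | And p q => And (rn B r p) (rn B r q)
  | Ex w p => Ex B (rn (S B) (upd r w B) p)
  end.

Lemma teval_rnt M s r t : teval M s (rnt r t) = teval M (fun v => s (r v)) t.
Proof.
  induction t as [v|f args IH] using term_ind'; simpl; auto.
  f_equal. rewrite map_map. apply map_ext_in. rewrite Forall_forall in IH; auto.
Qed.

Lemma term_in_rnt L r t : term_in L t -> term_in L (rnt r t).
Proof.
  induction t as [v|f args IH] using term_ind'; [simpl; auto|].
  change (rnt r (App f args)) with (App f (map (rnt r) args)).
  rewrite !term_in_App, length_map. intros [H1 H2]; split; auto.
  rewrite Forall_forall in *. intros x Hx. apply in_map_iff in Hx.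
  destruct Hx as [y [<- Hy]]. auto.
Qed.

Lemma formula_in_rn L phi : forall B rho, formula_in L phi -> formula_in L (rn B rho phi).
Proof.
  induction phi; simpl; intros B rho; intuition eauto using term_in_rnt.
  - rewrite length_map; auto.
  - unfold terms_in in *. intros x Hx. apply in_map_iff in Hx.
    destruct Hx as [y [<- Hy]]. auto using term_in_rnt.
Qed.

Lemma vars_rnt r t x : In x (term_vars (rnt r t)) -> exists u, In u (term_vars t) /\ x = r u.
Proof.
  induction t as [v|f args IH] using term_ind'; simpl.
  - intros [<-|[]]; eauto.
  - rewrite flat_map_concat_map, map_map, <- flat_map_concat_map.
    intros Hx. apply in_flat_map in Hx. destruct Hx as [y [Hy Hx]].
    rewrite Forall_forall in IH. destruct (IH y Hy Hx) as [u [Hu ->]].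
    exists u; split; auto. apply in_flat_map; eauto.
Qed.

Lemma free_rn phi : forall B rho x, free x (rn B rho phi) -> exists y, free y phi /\ x = rho y.
Proof.
  induction phi; simpl; intros B rho x Hx.
  - destruct Hx as [Hx|Hx]; apply vars_rnt in Hx; destruct Hx as [y0 [? ?]]; eauto.
  - rewrite flat_map_concat_map, map_map, <- flat_map_concat_map in Hx.
    apply in_flat_map in Hx. destruct Hx as [y [Hy Hx]].
    apply vars_rnt in Hx. destruct Hx as [y0 [Hu ->]]. exists y0; split; auto.
    apply in_flat_map; eauto.
  - eauto.
  - destruct Hx as [Hx|Hx]; [apply IHphi1 in Hx|apply IHphi2 in Hx];
    destruct Hx as [y0 [? ?]]; eauto.
  - destruct Hx as [Hne Hx]. apply IHphi in Hx. destruct Hx as [y0 [Hu Hx]].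
    unfold upd in Hx. destruct (Nat.eqb_spec y0 v); [congruence|]. eauto.
Qed.

Lemma sat_rn M phi : forall B rho s, (forall v, free v phi -> rho v < B) ->
  (sat M s (rn B rho phi) <-> sat M (fun v => s (rho v)) phi).
Proof.
  induction phi; simpl; intros B rho s H.
  - rewrite !teval_rnt; tauto.
  - rewrite map_map. rewrite (map_ext (fun x => teval M s (rnt rho x)) (teval M (fun v => s (rho v)))); [tauto|].
    intros; apply teval_rnt.
  - rewrite IHphi; auto; tauto.
  - rewrite IHphi1, IHphi2; auto; tauto.
  - split; intros [a Ha]; exists a; revert Ha;
    (rewrite IHphi; [|intros w Hw; unfold upd; destruct (Nat.eqb_spec w v); [lia|];
                      specialize (H w (conj n Hw)); lia]);
    apply sat_ext; intros w Hw; unfold upd; destruct (Nat.eqb_spec w v); subst;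
    try rewrite Nat.eqb_refl; auto;
    destruct (Nat.eqb_spec (rho w) B); auto; specialize (H w (conj n Hw)); lia.
Qed.

Definition tau {D : Type} (x : D) (l : list D) (d : D) : nat -> D :=
  fun v => match v with 0 => x | S i => nth i l d end.

Definition Inv (L0 : language) (M M' : structure) (dM : dom M) (dM' : dom M')
  (la : list (dom M)) (lb : list (dom M')) : Prop :=
  length la = length lb /\
  forall phi sg, formula_in L0 phi -> (forall v, free v phi -> sg v < length la) ->
    (sat M (fun v => nth (sg v) la dM) phi <-> sat M' (fun v => nth (sg v) lb dM') phi).

Lemma Inv_sym L0 M M' dM dM' la lb : Inv L0 M M' dM dM' la lb -> Inv L0 M' M dM' dM lb la.
Proof.
  intros [Hl H]; split; auto. intros phi sg H1 H2. symmetry; apply H; auto.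
  rewrite Hl; auto.
Qed.

Definition top : formula := Eq (Var 0) (Var 0).
Definition conj (l : list formula) : formula := fold_right And top l.

Lemma sat_conj M s l : sat M s (conj l) <-> forall phi, In phi l -> sat M s phi.
Proof.
  induction l; simpl; [split; auto; contradiction|].
  rewrite IHl. split; [intros [H1 H2] phi [<-|H]; auto|]. intros H; split; auto.
Qed.

Lemma free_conj l v : free v (conj l) -> v = 0 \/ exists phi, In phi l /\ free v phi.
Proof.
  induction l; simpl; [intros [[H|[]]|[H|[]]]; auto|].
  intros [H|H]; eauto. destruct (IHl H) as [?|[phi [? ?]]]; eauto.
Qed.

Lemma formula_in_conj L l : (forall phi, In phi l -> formula_in L phi) -> formula_in L (conj l).
Proof.
  induction l; simpl; intros H; [split; exact I|]. split; auto.
Qed.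

Lemma forth L0 M M' dM dM' la lb : omega_saturated L0 M' ->
  Inv L0 M M' dM dM' la lb -> forall c, exists d, Inv L0 M M' dM dM' (la++[c]) (lb++[d]).
Proof.
  intros Hsat [Hlen HI] c.
  set (n := length la).
  set (Sigma := fun phi => formula_in L0 phi /\ (forall v, free v phi -> v <= n) /\
                            sat M (tau c la dM) phi).
  destruct (Hsat n (tau dM' lb dM') Sigma) as [d Hd].
  - intros phi [? [? ?]]; auto.
  - intros l Hl.
    assert (HM : sat M (tau c la dM) (Ex 0 (conj l))).
    { exists c. rewrite (sat_ext M _ _ (tau c la dM)).
      - apply sat_conj. intros phi Hphi; apply Hl; auto.
      - intros [|v] _; reflexivity. }
    rewrite (sat_ext M _ _ (fun v => nth (pred v) la dM)) in HM.
    2:{ intros [|v] [Hv _]; [congruence|reflexivity]. }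
    rewrite HI in HM.
    + destruct HM as [b Hb]. exists b. intros phi Hphi.
      rewrite sat_conj in Hb. specialize (Hb phi Hphi). revert Hb. apply sat_ext.
      intros [|v] _; reflexivity.
    + simpl. apply formula_in_conj. intros phi Hphi; apply Hl; auto.
    + intros v [Hv0 Hv]. apply free_conj in Hv. destruct Hv as [->|[phi [Hphi Hv]]]; [congruence|].
      destruct (Hl phi Hphi) as [_ [Hb _]]. specialize (Hb v Hv). fold n. lia.
  - exists d.
    assert (Key : forall phi sg, formula_in L0 phi ->
      (forall v, free v phi -> sg v < length (la ++ [c])) ->
      sat M (fun v => nth (sg v) (la ++ [c]) dM) phi ->
      sat M' (fun v => nth (sg v) (lb ++ [d]) dM') phi).
    { intros phi sg HL Hf Hs.
      rewrite length_app in Hf; simpl in Hf.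
      set (rho := fun v => if Nat.eqb (sg v) n then 0 else S (sg v)).
      assert (Hr : forall v, free v phi -> rho v < S n).
      { intros v Hv. specialize (Hf v Hv). unfold rho. fold n in Hf.
        destruct (Nat.eqb_spec (sg v) n); lia. }
      assert (HS : Sigma (rn (S n) rho phi)).
      { split; [apply formula_in_rn; auto|split].
        - intros x Hx. apply free_rn in Hx. destruct Hx as [y [Hy ->]].
          specialize (Hr y Hy). lia.
        - rewrite sat_rn; auto. revert Hs. apply sat_ext. intros v Hv.
          specialize (Hf v Hv). fold n in Hf. unfold rho.
          destruct (Nat.eqb_spec (sg v) n) as [E|E].
          + rewrite E. unfold n. rewrite nth_middle. reflexivity.
          + simpl. rewrite app_nth1; auto. fold n. lia. }
      apply Hd in HS. rewrite (sat_ext M' _ _ (tau d lb dM')) in HS.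
      2:{ intros [|v] _; reflexivity. }
      rewrite sat_rn in HS; auto. revert HS. apply sat_ext. intros v Hv.
      specialize (Hf v Hv). fold n in Hf. unfold rho.
      destruct (Nat.eqb_spec (sg v) n) as [E|E].
      + rewrite E. unfold n. rewrite Hlen, nth_middle. reflexivity.
      + simpl. rewrite app_nth1; auto. rewrite <- Hlen. fold n. lia. }
    split; [rewrite !length_app; simpl; lia|].
    intros phi sg HL Hf. split; [apply Key; auto|].
    intros H. destruct (classic (sat M (fun v => nth (sg v) (la ++ [c]) dM) phi)); auto.
    exfalso. apply (Key (Neg phi) sg); auto.
Qed.

Lemma to_nat_inj p q : to_nat p = to_nat q -> p = q.
Proof. intros H. rewrite <- (cancel_of_to p), <- (cancel_of_to q), H. reflexivity. Qed.
Opaque to_nat.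

Definition enc_list {A} (f : A -> nat) : list A -> nat :=
  fix go l := match l with [] => 0 | x :: l' => S (to_nat (f x, go l')) end.

Lemma enc_list_inj {A} (f : A -> nat) l :
  (forall x, In x l -> forall y, f x = f y -> x = y) ->
  forall l', enc_list f l = enc_list f l' -> l = l'.
Proof.
  induction l as [|x l IH]; intros Hf [|y l'] H; simpl in H; try discriminate; auto.
  injection H as H. apply to_nat_inj in H. injection H as H1 H2.
  f_equal; [apply Hf; simpl; auto|]. apply IH; auto. intros; apply Hf; simpl; auto.
Qed.

Fixpoint enc_term (t : term) : nat :=
  match t with
  | Var v => to_nat (0, v)
  | App f args => to_nat (1, to_nat (f, enc_list enc_term args))
  end.

Lemma enc_term_inj t : forall t', enc_term t = enc_term t' -> t = t'.
Proof.
  induction t as [v|f args IH] using term_ind'; intros [v'|f' args'] H; simpl in H;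
    apply to_nat_inj in H; injection H; intros; subst; auto; try discriminate.
  - apply to_nat_inj in H0. injection H0; intros; subst. f_equal.
    apply (enc_list_inj enc_term); auto. rewrite Forall_forall in IH. auto.
Qed.

Fixpoint enc_formula (phi : formula) : nat :=
  match phi with
  | Eq t u => to_nat (0, to_nat (enc_term t, enc_term u))
  | Rel r args => to_nat (1, to_nat (r, enc_list enc_term args))
  | Neg p => to_nat (2, enc_formula p)
  | And p q => to_nat (3, to_nat (enc_formula p, enc_formula q))
  | Ex v p => to_nat (4, to_nat (v, enc_formula p))
  end.

Lemma enc_formula_inj phi : forall psi, enc_formula phi = enc_formula psi -> phi = psi.
Proof.
  induction phi; intros [] H; simpl in H; apply to_nat_inj in H; injection H; intros;
    try discriminate; subst.
  - apply to_nat_inj in H0; injection H0; intros. f_equal; apply enc_term_inj; auto.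
  - apply to_nat_inj in H0; injection H0; intros; subst. f_equal.
    apply (enc_list_inj enc_term); auto. intros; apply enc_term_inj; auto.
  - f_equal; auto.
  - apply to_nat_inj in H0; injection H0; intros. f_equal; auto.
  - apply to_nat_inj in H0; injection H0; intros; subst. f_equal; auto.
Qed.

Definition task : Type := (bool * formula * nat * list nat)%type.

Definition enc_task (t : task) : nat :=
  match t with (b, phi, v, sl) =>
    to_nat (if b then 1 else 0, to_nat (enc_formula phi, to_nat (v, enc_list (fun x => x) sl)))
  end.

Lemma enc_task_inj t t' : enc_task t = enc_task t' -> t = t'.
Proof.
  destruct t as [[[b phi] v] sl], t' as [[[b' phi'] v'] sl']; simpl; intros H.
  apply to_nat_inj in H; injection H as Hb H. apply to_nat_inj in H; injection H as Hp H.
  apply to_nat_inj in H; injection H as Hv H.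
  apply enc_formula_inj in Hp. apply enc_list_inj in H; [|auto].
  subst. destruct b, b'; simpl in Hb; try discriminate; auto.
Qed.

Definition default_task : task := (true, Eq (Var 0) (Var 0), 0, []).

Definition dec (n : nat) : task :=
  match excluded_middle_informative (exists t, enc_task t = n) with
  | left H => proj1_sig (constructive_indefinite_description _ H)
  | right _ => default_task
  end.

Lemma dec_enc t : dec (enc_task t) = t.
Proof.
  unfold dec. destruct excluded_middle_informative as [H|H]; [|exfalso; eauto].
  destruct constructive_indefinite_description as [t' Ht']. simpl.
  apply enc_task_inj; auto.
Qed.

Lemma task_often t K : exists n, K <= n /\ dec (fst (of_nat n)) = t.
Proof.
  exists (to_nat (enc_task t, K)). split.
  - pose proof (to_nat_non_decreasing (enc_task t) K); lia.
  - rewrite cancel_of_to. apply dec_enc.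
Qed.

Fixpoint fvb (phi : formula) : nat :=
  match phi with
  | Eq t u => S (list_max (term_vars t ++ term_vars u))
  | Rel _ args => S (list_max (flat_map term_vars args))
  | Neg p => fvb p
  | And p q => max (fvb p) (fvb q)
  | Ex _ p => fvb p
  end.

Lemma in_le_list_max x l : In x l -> x <= list_max l.
Proof.
  intros H. pose proof (list_max_le l (list_max l)) as [H1 _].
  specialize (H1 (le_n _)). rewrite Forall_forall in H1. auto.
Qed.

Lemma fvb_spec phi v : free v phi -> v < fvb phi.
Proof.
  induction phi; simpl; intros H.
  - assert (In v (term_vars t ++ term_vars u)) by (apply in_or_app; tauto).
    apply in_le_list_max in H0. lia.
  - apply in_le_list_max in H. lia.
  - auto.
  - destruct H as [H|H]; [apply IHphi1 in H|apply IHphi2 in H]; lia.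
  - destruct H; auto.
Qed.

Fixpoint maxto (sg : nat -> nat) (m : nat) : nat :=
  match m with 0 => 0 | S m => max (sg m) (maxto sg m) end.

Lemma maxto_spec sg m v : v < m -> sg v <= maxto sg m.
Proof.
  induction m; simpl; intros H; [lia|]. destruct (Nat.eq_dec v m); subst; [lia|].
  specialize (IHm ltac:(lia)). lia.
Qed.

Lemma nth_map_seq (sg : nat -> nat) m u : u < m -> nth u (map sg (seq 0 m)) 0 = sg u.
Proof.
  intros H. rewrite (nth_indep _ _ (sg 0)); [|rewrite length_map, length_seq; auto].
  rewrite map_nth, seq_nth; auto.
Qed.

Definition tvpick (M : structure) (d : dom M) (l : list (dom M)) (phi : formula)
  (v : nat) (sl : list nat) : dom M :=
  match excluded_middle_informative
          (sat M (fun u => nth (nth u sl 0) l d) (Ex v phi)) with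
  | left H => proj1_sig (constructive_indefinite_description _ H)
  | right _ => d
  end.

Lemma tvpick_spec M d l phi v sl :
  sat M (fun u => nth (nth u sl 0) l d) (Ex v phi) ->
  sat M (upd (fun u => nth (nth u sl 0) l d) v (tvpick M d l phi v sl)) phi.
Proof.
  intros H. unfold tvpick. destruct excluded_middle_informative as [H'|H']; [|contradiction].
  destruct constructive_indefinite_description; simpl; auto.
Qed.

Definition fwd L0 M M' dM dM' (Hs : omega_saturated L0 M') la lb
  (H : Inv L0 M M' dM dM' la lb) (c : dom M) : dom M' :=
  proj1_sig (constructive_indefinite_description _ (forth L0 M M' dM dM' la lb Hs H c)).

Lemma fwd_spec L0 M M' dM dM' Hs la lb H c :
  Inv L0 M M' dM dM' (la ++ [c]) (lb ++ [fwd L0 M M' dM dM' Hs la lb H c]).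
Proof. unfold fwd. destruct constructive_indefinite_description; simpl; auto. Qed.

Definition St L0 (M1 M2 : structure) d1 d2 :=
  {p : list (dom M1) * list (dom M2) | Inv L0 M1 M2 d1 d2 (fst p) (snd p)}.

Definition step L0 M1 M2 d1 d2 (Hs1 : omega_saturated L0 M1) (Hs2 : omega_saturated L0 M2)
  (t : task) (st : St L0 M1 M2 d1 d2) : St L0 M1 M2 d1 d2 :=
  match st with exist _ p H =>
  match t with (side, phi, v, sl) =>
  if side then
    let c := tvpick M1 d1 (fst p) phi v sl in
    exist _ (fst p ++ [c], snd p ++ [fwd L0 M1 M2 d1 d2 Hs2 (fst p) (snd p) H c])
      (fwd_spec L0 M1 M2 d1 d2 Hs2 (fst p) (snd p) H c)
  else
    let d := tvpick M2 d2 (snd p) phi v sl in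
    exist _ (fst p ++ [fwd L0 M2 M1 d2 d1 Hs1 (snd p) (fst p)
                          (Inv_sym _ _ _ _ _ _ _ H) d], snd p ++ [d])
      (Inv_sym _ _ _ _ _ _ _ (fwd_spec L0 M2 M1 d2 d1 Hs1 (snd p) (fst p)
                          (Inv_sym _ _ _ _ _ _ _ H) d))
  end end.

Lemma step_spec L0 M1 M2 d1 d2 Hs1 Hs2 t st :
  exists c d,
    proj1_sig (step L0 M1 M2 d1 d2 Hs1 Hs2 t st) =
      (fst (proj1_sig st) ++ [c], snd (proj1_sig st) ++ [d]) /\
    (forall phi v sl, t = (true, phi, v, sl) -> c = tvpick M1 d1 (fst (proj1_sig st)) phi v sl) /\
    (forall phi v sl, t = (false, phi, v, sl) -> d = tvpick M2 d2 (snd (proj1_sig st)) phi v sl).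
Proof.
  destruct st as [p H]. destruct t as [[[side phi] v] sl]. destruct side; simpl;
  (eexists; eexists; split; [reflexivity|]); split; intros ? ? ? E; inversion E; auto.
Qed.

Fixpoint stg L0 M1 M2 d1 d2 Hs1 Hs2 (H0 : Inv L0 M1 M2 d1 d2 [] []) (n : nat)
  : St L0 M1 M2 d1 d2 :=
  match n with
  | 0 => exist _ ([], []) H0
  | S n => step L0 M1 M2 d1 d2 Hs1 Hs2 (dec (fst (of_nat n))) (stg L0 M1 M2 d1 d2 Hs1 Hs2 H0 n)
  end.

Lemma construct L0 M1 M2 d1 d2 :
  omega_saturated L0 M1 -> omega_saturated L0 M2 -> Inv L0 M1 M2 d1 d2 [] [] ->
  exists (a : nat -> dom M1) (b : nat -> dom M2),
    (forall phi sg, formula_in L0 phi ->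
       (sat M1 (fun v => a (sg v)) phi <-> sat M2 (fun v => b (sg v)) phi)) /\
    (forall phi v sg, sat M1 (fun u => a (sg u)) (Ex v phi) ->
       exists k, sat M1 (upd (fun u => a (sg u)) v (a k)) phi) /\
    (forall phi v sg, sat M2 (fun u => b (sg u)) (Ex v phi) ->
       exists k, sat M2 (upd (fun u => b (sg u)) v (b k)) phi).
Proof.
  intros Hs1 Hs2 H0.
  set (la := fun n => fst (proj1_sig (stg L0 M1 M2 d1 d2 Hs1 Hs2 H0 n))).
  set (lb := fun n => snd (proj1_sig (stg L0 M1 M2 d1 d2 Hs1 Hs2 H0 n))).
  assert (Hstep : forall n, exists c d, la (S n) = la n ++ [c] /\ lb (S n) = lb n ++ [d] /\
    (forall phi v sl, dec (fst (of_nat n)) = (true, phi, v, sl) -> c = tvpick M1 d1 (la n) phi v sl) /\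
    (forall phi v sl, dec (fst (of_nat n)) = (false, phi, v, sl) -> d = tvpick M2 d2 (lb n) phi v sl)).
  { intros n. destruct (step_spec L0 M1 M2 d1 d2 Hs1 Hs2 (dec (fst (of_nat n)))
                 (stg L0 M1 M2 d1 d2 Hs1 Hs2 H0 n)) as [c [d [E [E1 E2]]]].
    exists c, d. unfold la, lb. simpl. rewrite E. simpl. auto. }
  assert (Hlen : forall n, length (la n) = n /\ length (lb n) = n).
  { induction n; [simpl; auto|]. destruct (Hstep n) as [c [d [E1 [E2 _]]]].
    rewrite E1, E2, !length_app; simpl; lia. }
  assert (HInv : forall n, Inv L0 M1 M2 d1 d2 (la n) (lb n)).
  { intros n. exact (proj2_sig (stg L0 M1 M2 d1 d2 Hs1 Hs2 H0 n)). }
  set (a := fun k => nth k (la (S k)) d1).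
  set (b := fun k => nth k (lb (S k)) d2).
  assert (Hna : forall n k, k < n -> nth k (la n) d1 = a k /\ nth k (lb n) d2 = b k).
  { induction n; intros k Hk; [lia|]. destruct (Nat.eq_dec k n) as [->|Hne]; [unfold a, b; auto|].
    destruct (Hstep n) as [c [d [E1 [E2 _]]]]. rewrite E1, E2.
    destruct (Hlen n) as [L1 L2].
    rewrite !app_nth1; try lia. apply IHn; lia. }
  assert (Hlast : forall n c d, la (S n) = la n ++ [c] -> lb (S n) = lb n ++ [d] -> a n = c /\ b n = d).
  { intros n c d E1 E2. unfold a, b. rewrite E1, E2. destruct (Hlen n) as [L1 L2].
    rewrite <- L1 at 1. rewrite nth_middle. rewrite <- L2 at 1. rewrite nth_middle. auto. }
  exists a, b. split; [|split].
  - intros phi sg HL. set (K := S (maxto sg (fvb phi))).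
    destruct (HInv K) as [_ HI]. destruct (Hlen K) as [L1 L2].
    assert (Hf : forall v, free v phi -> sg v < K).
    { intros v Hv. pose proof (maxto_spec sg _ _ (fvb_spec _ _ Hv)). unfold K; lia. }
    rewrite (sat_ext M1 _ _ (fun v => nth (sg v) (la K) d1)), (sat_ext M2 _ _ (fun v => nth (sg v) (lb K) d2)).
    + apply HI; auto. rewrite L1; auto.
    + intros v Hv. symmetry. apply Hna; auto.
    + intros v Hv. symmetry. apply Hna; auto.
  - intros phi v sg Hex.
    set (m := fvb (Ex v phi)). set (sl := map sg (seq 0 m)).
    destruct (task_often (true, phi, v, sl) (S (maxto sg m))) as [n [Hn Ht]].
    destruct (Hstep n) as [c [d [E1 [E2 [Ec _]]]]].
    specialize (Ec _ _ _ Ht). destruct (Hlast n c d E1 E2) as [Ha _].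
    assert (Hag : forall u, free u (Ex v phi) -> nth (nth u sl 0) (la n) d1 = a (sg u)).
    { intros u Hu. pose proof (fvb_spec _ _ Hu) as Hm. fold m in Hm.
      unfold sl. rewrite nth_map_seq; auto. apply Hna.
      pose proof (maxto_spec sg _ _ Hm). lia. }
    rewrite (sat_ext M1 _ _ (fun u => nth (nth u sl 0) (la n) d1)) in Hex.
    2:{ intros; symmetry; auto. }
    apply tvpick_spec in Hex. rewrite <- Ec in Hex. exists n. revert Hex. apply sat_ext.
    intros u Hu. unfold upd. destruct (Nat.eqb_spec u v); [congruence|]. symmetry; apply Hag. simpl; auto.
  - intros phi v sg Hex.
    set (m := fvb (Ex v phi)). set (sl := map sg (seq 0 m)).
    destruct (task_often (false, phi, v, sl) (S (maxto sg m))) as [n [Hn Ht]].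
    destruct (Hstep n) as [c [d [E1 [E2 [_ Ed]]]]].
    specialize (Ed _ _ _ Ht). destruct (Hlast n c d E1 E2) as [_ Hb].
    assert (Hag : forall u, free u (Ex v phi) -> nth (nth u sl 0) (lb n) d2 = b (sg u)).
    { intros u Hu. pose proof (fvb_spec _ _ Hu) as Hm. fold m in Hm.
      unfold sl. rewrite nth_map_seq; auto. apply Hna.
      pose proof (maxto_spec sg _ _ Hm). lia. }
    rewrite (sat_ext M2 _ _ (fun u => nth (nth u sl 0) (lb n) d2)) in Hex.
    2:{ intros; symmetry; auto. }
    apply tvpick_spec in Hex. rewrite <- Ed in Hex. exists n. revert Hex. apply sat_ext.
    intros u Hu. unfold upd. destruct (Nat.eqb_spec u v); [congruence|]. symmetry; apply Hag. simpl; auto.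
Qed.

Definition DD (M1 : structure) (a : nat -> dom M1) : Type := {x : dom M1 | exists k, a k = x}.
Definition idx {M1 : structure} {a : nat -> dom M1} (x : DD M1 a) : nat :=
  proj1_sig (constructive_indefinite_description _ (proj2_sig x)).
Lemma idx_spec M1 a (x : DD M1 a) : a (idx x) = proj1_sig x.
Proof. unfold idx. destruct constructive_indefinite_description; auto. Qed.
Definition inD (M1 : structure) (a : nat -> dom M1) k : DD M1 a := exist _ (a k) (ex_intro _ k eq_refl).

Lemma DD_eq M1 a (x y : DD M1 a) : proj1_sig x = proj1_sig y -> x = y.
Proof. destruct x, y; simpl; intros ->; f_equal; apply proof_irrelevance. Qed.

Definition hh {M1 M2 : structure} {a : nat -> dom M1} (b : nat -> dom M2) (x : DD M1 a) : dom M2 :=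
  b (idx x).

Definition fN (M1 M2 : structure) a b (L1 : language) (f : nat) (l : list (DD M1 a)) : DD M1 a :=
  if excluded_middle_informative (L1 (FunSym f (length l))) then
    match excluded_middle_informative (exists k, a k = funs M1 f (map (@proj1_sig _ _) l)) with
    | left H => exist _ _ H
    | right _ => inD M1 a 0
    end
  else
    match excluded_middle_informative (exists k, b k = funs M2 f (map (hh b) l)) with
    | left H => inD M1 a (proj1_sig (constructive_indefinite_description _ H))
    | right _ => inD M1 a 0
    end.

Definition rN (M1 M2 : structure) a (b : nat -> dom M2) (L1 : language) (r : nat)
  (l : list (DD M1 a)) : Prop :=
  (L1 (RelSym r (length l)) /\ rels M1 r (map (@proj1_sig _ _) l)) \/
  (~ L1 (RelSym r (length l)) /\ rels M2 r (map (hh b) l)).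

Definition NN M1 M2 a b L1 : structure :=
  {| dom := DD M1 a; funs := fN M1 M2 a b L1; rels := rN M1 M2 a b L1 |}.

Lemma map_seq_nth {Y} (F : nat -> Y) (l : list nat) : forall k (g : nat -> Y),
  (forall i, i < length l -> g (k + i) = F (nth i l 0)) -> map g (seq k (length l)) = map F l.
Proof.
  induction l; simpl; intros k g H; auto. f_equal.
  - specialize (H 0 ltac:(lia)). rewrite Nat.add_0_r in H. auto.
  - apply IHl. intros i Hi. replace (S k + i) with (k + S i) by lia. apply (H (S i)); lia.
Qed.

Definition feq (f n : nat) : formula := Eq (Var 0) (App f (map Var (seq 1 n))).

Lemma sat_feq M s f n : sat M s (feq f n) <-> s 0 = funs M f (map s (seq 1 n)).
Proof. simpl. rewrite map_map. simpl. tauto. Qed.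

Definition sgl {X} (i0 : nat) (ix : X -> nat) (l : list X) : nat -> nat :=
  fun u => match u with 0 => i0 | S i => nth i (map ix l) 0 end.

Lemma map_sgl {X Y} (e : nat -> Y) i0 (ix : X -> nat) l :
  map (fun v => e (sgl i0 ix l v)) (seq 1 (length l)) = map (fun y => e (ix y)) l.
Proof.
  rewrite <- (length_map ix l). rewrite (map_seq_nth e). 
  - rewrite map_map; auto.
  - intros i Hi. reflexivity.
Qed.

Lemma closure (M : structure) (e : nat -> dom M)
  (TV : forall phi v sg, sat M (fun u => e (sg u)) (Ex v phi) ->
        exists k, sat M (upd (fun u => e (sg u)) v (e k)) phi)
  {X} (ix : X -> nat) (l : list X) f :
  exists k, e k = funs M f (map (fun y => e (ix y)) l).
Proof.
  destruct (TV (feq f (length l)) 0 (sgl 0 ix l)) as [k Hk].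
  - exists (funs M f (map (fun y => e (ix y)) l)). apply sat_feq.
    unfold upd at 1; simpl. rewrite <- (map_sgl e 0 ix l). f_equal. apply map_ext_in.
    intros u Hu. apply in_seq in Hu. unfold upd. destruct (Nat.eqb_spec u 0); [lia|auto].
  - exists k. apply sat_feq in Hk. unfold upd at 1 in Hk; simpl in Hk. rewrite Hk.
    rewrite <- (map_sgl e 0 ix l). f_equal. apply map_ext_in.
    intros u Hu. apply in_seq in Hu. unfold upd. destruct (Nat.eqb_spec u 0); [lia|auto].
Qed.

Lemma tev1 M1 M2 a b L1
  (TV1 : forall phi v sg, sat M1 (fun u => a (sg u)) (Ex v phi) ->
        exists k, sat M1 (upd (fun u => a (sg u)) v (a k)) phi) t :
  term_in L1 t -> forall s, proj1_sig (teval (NN M1 M2 a b L1) s t) =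
                            teval M1 (fun v => proj1_sig (s v)) t.
Proof.
  induction t as [v|f args IH] using term_ind'; [simpl; auto|].
  rewrite term_in_App. intros [Hf Hargs] s.
  change (teval (NN M1 M2 a b L1) s (App f args)) with
    (fN M1 M2 a b L1 f (map (teval (NN M1 M2 a b L1) s) args)).
  set (l := map (teval (NN M1 M2 a b L1) s) args).
  unfold fN. destruct (excluded_middle_informative _) as [_|Hn];
    [|exfalso; apply Hn; unfold l; rewrite length_map; auto].
  destruct (excluded_middle_informative _) as [Hk|Hk].
  - simpl. f_equal. unfold l. rewrite map_map. apply map_ext_in.
    rewrite Forall_forall in IH, Hargs. intros x Hx. apply IH; auto.
  - exfalso. apply Hk. destruct (closure M1 a TV1 idx l f) as [k Hk']. exists k.
    rewrite Hk'. f_equal. apply map_ext; intros; apply idx_spec.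
Qed.

Lemma hb_iff M1 M2 (a : nat -> dom M1) (b : nat -> dom M2) (L0 : language)
  (HE : forall phi sg, formula_in L0 phi ->
       (sat M1 (fun v => a (sg v)) phi <-> sat M2 (fun v => b (sg v)) phi)) i j :
  a i = a j <-> b i = b j.
Proof.
  exact (HE (Eq (Var 0) (Var 1)) (fun u => match u with 0 => i | _ => j end) (Logic.conj I I)).
Qed.

Lemma tev2 M1 M2 a b L0 L1 L2
  (HE : forall phi sg, formula_in L0 phi ->
       (sat M1 (fun v => a (sg v)) phi <-> sat M2 (fun v => b (sg v)) phi))
  (TV1 : forall phi v sg, sat M1 (fun u => a (sg u)) (Ex v phi) ->
        exists k, sat M1 (upd (fun u => a (sg u)) v (a k)) phi)
  (TV2 : forall phi v sg, sat M2 (fun u => b (sg u)) (Ex v phi) ->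
        exists k, sat M2 (upd (fun u => b (sg u)) v (b k)) phi)
  (HL : forall s, (L1 s /\ L2 s) <-> L0 s) t :
  term_in L2 t -> forall s, hh b (teval (NN M1 M2 a b L1) s t) =
                            teval M2 (fun v => hh b (s v)) t.
Proof.
  induction t as [v|f args IH] using term_ind'; [simpl; auto|].
  rewrite term_in_App. intros [Hf Hargs] s.
  change (teval (NN M1 M2 a b L1) s (App f args)) with
    (fN M1 M2 a b L1 f (map (teval (NN M1 M2 a b L1) s) args)).
  assert (Hm : map (hh b) (map (teval (NN M1 M2 a b L1) s) args) =
               map (teval M2 (fun v => hh b (s v))) args).
  { rewrite map_map. apply map_ext_in.
    rewrite Forall_forall in IH, Hargs. intros x Hx. apply IH; auto. }
  change (teval M2 (fun v => hh b (s v)) (App f args)) with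
    (funs M2 f (map (teval M2 (fun v => hh b (s v))) args)).
  rewrite <- Hm.
  set (l := map (teval (NN M1 M2 a b L1) s) args).
  assert (Hlen : length l = length args) by (unfold l; rewrite length_map; auto).
  unfold fN. destruct (excluded_middle_informative _) as [H1|Hn].
  - destruct (excluded_middle_informative _) as [Hk|Hk].
    + set (x := exist _ _ Hk : DD M1 a).
      change (hh b x = funs M2 f (map (hh b) l)).
      assert (H0 : formula_in L0 (feq f (length l))).
      { unfold feq. split; [exact I|]. rewrite term_in_App, length_map, length_seq. split.
        - apply HL. split; auto. rewrite Hlen in *. auto.
        - apply Forall_forall. intros y Hy. apply in_map_iff in Hy.
          destruct Hy as [? [<- _]]. exact I. }
      pose proof (HE _ (sgl (idx x) idx l) H0) as HE'.
      rewrite !sat_feq, !map_sgl in HE'. apply HE'.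
      simpl. rewrite idx_spec. simpl. f_equal. apply map_ext; intros; symmetry; apply idx_spec.
    + exfalso. apply Hk. destruct (closure M1 a TV1 idx l f) as [k Hk']. exists k.
      rewrite Hk'. f_equal. apply map_ext; intros; apply idx_spec.
  - destruct (excluded_middle_informative _) as [Hk|Hk].
    + destruct constructive_indefinite_description as [k0 Hk0]. simpl.
      rewrite <- Hk0. unfold hh. apply (hb_iff M1 M2 a b L0 HE).
      rewrite idx_spec. reflexivity.
    + exfalso. apply Hk. apply (closure M2 b TV2 idx l f).
Qed.

Lemma map_idx0 {X Y} (e : nat -> Y) (ix : X -> nat) l :
  map (fun v => e (nth v (map ix l) 0)) (seq 0 (length l)) = map (fun y => e (ix y)) l.
Proof.
  rewrite <- (length_map ix l). rewrite (map_seq_nth e). 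
  - rewrite map_map; auto.
  - intros i Hi. reflexivity.
Qed.

Lemma sat1 M1 M2 a b L1
  (TV1 : forall phi v sg, sat M1 (fun u => a (sg u)) (Ex v phi) ->
        exists k, sat M1 (upd (fun u => a (sg u)) v (a k)) phi) phi :
  formula_in L1 phi -> forall s, sat (NN M1 M2 a b L1) s phi <->
                                 sat M1 (fun v => proj1_sig (s v)) phi.
Proof.
  induction phi; intros HF s.
  - destruct HF as [Ht Hu]. simpl. rewrite <- !(tev1 M1 M2 a b L1 TV1); auto.
    split; [intros ->; auto|apply DD_eq].
  - destruct HF as [Hr Hargs].
    assert (Hm : forall x, In x args -> proj1_sig (teval (NN M1 M2 a b L1) s x) =
                 teval M1 (fun v => proj1_sig (s v)) x).
    { intros x Hx. apply tev1; auto. }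
    simpl. unfold rN. rewrite !map_map, length_map, (map_ext_in _ _ args Hm). tauto.
  - simpl. rewrite IHphi; auto. tauto.
  - destruct HF. simpl. rewrite IHphi1, IHphi2; auto. tauto.
  - simpl. split.
    + intros [x Hx]. exists (proj1_sig x). rewrite IHphi in Hx; auto. revert Hx.
      apply sat_ext. intros u _. unfold upd. destruct (Nat.eqb u v); auto.
    + intros Hx. destruct (TV1 phi v (fun u => idx (s u))) as [k Hk].
      * simpl. destruct Hx as [y Hy]. exists y. revert Hy. apply sat_ext.
        intros u _. unfold upd. destruct (Nat.eqb u v); auto. rewrite idx_spec; auto.
      * exists (inD M1 a k). rewrite IHphi; auto. revert Hk. apply sat_ext.
        intros u _. unfold upd. destruct (Nat.eqb u v); auto. rewrite idx_spec; auto.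
Qed.

Lemma sat2 M1 M2 a b L0 L1 L2
  (HE : forall phi sg, formula_in L0 phi ->
       (sat M1 (fun v => a (sg v)) phi <-> sat M2 (fun v => b (sg v)) phi))
  (TV1 : forall phi v sg, sat M1 (fun u => a (sg u)) (Ex v phi) ->
        exists k, sat M1 (upd (fun u => a (sg u)) v (a k)) phi)
  (TV2 : forall phi v sg, sat M2 (fun u => b (sg u)) (Ex v phi) ->
        exists k, sat M2 (upd (fun u => b (sg u)) v (b k)) phi)
  (HL : forall s, (L1 s /\ L2 s) <-> L0 s) phi :
  formula_in L2 phi -> forall s, sat (NN M1 M2 a b L1) s phi <->
                                 sat M2 (fun v => hh b (s v)) phi.
Proof.
  induction phi; intros HF s.
  - destruct HF as [Ht Hu]. simpl. rewrite <- !(tev2 M1 M2 a b L0 L1 L2 HE TV1 TV2 HL); auto.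
    split; [intros ->; auto|]. intros E. apply DD_eq. rewrite <- !idx_spec.
    apply (hb_iff M1 M2 a b L0 HE). exact E.
  - destruct HF as [Hr Hargs].
    assert (Hm : map (hh b) (map (teval (NN M1 M2 a b L1) s) args) =
                 map (teval M2 (fun v => hh b (s v))) args).
    { rewrite map_map. apply map_ext_in. intros x Hx.
      apply (tev2 M1 M2 a b L0 L1 L2 HE TV1 TV2 HL); auto. }
    simpl. unfold rN. rewrite length_map. rewrite <- Hm.
    set (l := map (teval (NN M1 M2 a b L1) s) args).
    destruct (classic (L1 (RelSym r (length args)))) as [H1|H1]; [|tauto].
    assert (H0 : formula_in L0 (Rel r (map Var (seq 0 (length l))))).
    { split.
      - rewrite length_map, length_seq. apply HL. unfold l; rewrite length_map; auto.
      - intros t Ht. apply in_map_iff in Ht. destruct Ht as [? [<- _]]. exact I. }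
    pose proof (HE _ (fun i => nth i (map idx l) 0) H0) as HE'. simpl in HE'.
    rewrite !map_map in HE'. simpl in HE'. rewrite !map_idx0 in HE'.
    assert (Heq : map (fun y => a (idx y)) l = map (@proj1_sig _ _) l).
    { apply map_ext; intros; apply idx_spec. }
    rewrite Heq in HE'.
    split.
    + intros [[_ HH]|[HH _]]; [apply HE'; exact HH|contradiction].
    + intros HH; left; split; [auto|apply HE'; exact HH].
  - simpl. rewrite IHphi; auto. tauto.
  - destruct HF. simpl. rewrite IHphi1, IHphi2; auto. tauto.
  - simpl. split.
    + intros [x Hx]. exists (hh b x). rewrite IHphi in Hx; auto. revert Hx.
      apply sat_ext. intros u _. unfold upd. destruct (Nat.eqb u v); auto.
    + intros Hx. destruct (TV2 phi v (fun u => idx (s u))) as [k Hk].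
      * exact Hx.
      * exists (inD M1 a k). rewrite IHphi; auto. revert Hk. apply sat_ext.
        intros u _. unfold upd. destruct (Nat.eqb u v); auto.
        unfold hh. apply (hb_iff M1 M2 a b L0 HE). rewrite idx_spec; auto.
Qed.

Theorem mainTheorem4 :
  forall (L0 L1 L2 : language) (T0 T1 T2 : theory)
         (p1 p2 : formula -> Prop),
    recursive_language L0 ->
    recursive_language L1 ->
    recursive_language L2 ->
    (forall s, L0 s -> L1 s) ->
    (forall s, L0 s -> L2 s) ->
    (forall s, (L1 s /\ L2 s) <-> L0 s) ->
    complete_theory L0 T0 ->
    theory_in L1 T1 -> is_type L1 p1 ->
    theory_in L2 T2 -> is_type L2 p2 ->
    Con_sat L0 T0 (fun M => is_model M T1 /\ omits M p1) ->
    Con_sat L0 T0 (fun M => is_model M T2 /\ omits M p2) ->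
    exists M : structure,
      countable_structure M /\
      is_model M T0 /\ is_model M T1 /\ is_model M T2 /\
      omits M p1 /\ omits M p2.
Proof.
  intros L0 L1 L2 T0 T1 T2 p1 p2 _ _ _ H01 H02 HL Hc HT1 Hp1 HT2 Hp2
    [M1 [HM1 [[HM1' Hom1] Hs1]]] [M2 [HM2 [[HM2' Hom2] Hs2]]].
  pose proof HM1 as [[d1] HM1s]. pose proof HM2 as [[d2] HM2s].
  assert (H0 : Inv L0 M1 M2 d1 d2 [] []).
  { split; [reflexivity|]. intros phi sg HF Hf.
    assert (Hsent : sentence phi) by (intros v Hv; specialize (Hf v Hv); simpl in Hf; lia).
    destruct Hc as [_ Hc]. destruct (Hc phi HF Hsent) as [E|E].
    - split; intros _; apply E; auto.
    - split; intros H; exfalso; [apply (E M1 HM1 _ H)|apply (E M2 HM2 _ H)]. }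
  destruct (construct L0 M1 M2 d1 d2 Hs1 Hs2 H0) as [a [b [HE [TV1 TV2]]]].
  exists (NN M1 M2 a b L1).
  assert (Hinh : inhabited (dom (NN M1 M2 a b L1))) by (constructor; exact (inD M1 a 0)).
  destruct Hp1 as [n1 Hp1]. destruct Hp2 as [n2 Hp2].
  split; [|split; [|split; [|split; [|split]]]].
  - exists idx. intros x y E. apply DD_eq. rewrite <- !idx_spec, E. reflexivity.
  - split; auto. intros phi Hphi s. apply (sat1 M1 M2 a b L1 TV1).
    + apply (formula_in_mono L0); auto. apply (proj1 Hc); auto.
    + apply HM1s; auto.
  - split; auto. intros phi Hphi s. apply (sat1 M1 M2 a b L1 TV1).
    + apply HT1; auto.
    + apply HM1'; auto.
  - split; auto. intros phi Hphi s. apply (sat2 M1 M2 a b L0 L1 L2 HE TV1 TV2 HL).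
    + apply HT2; auto.
    + apply HM2'; auto.
  - intros s. destruct (Hom1 (fun v => proj1_sig (s v))) as [phi [Hp Hn]].
    exists phi. split; auto. rewrite (sat1 M1 M2 a b L1 TV1); auto. apply Hp1; auto.
  - intros s. destruct (Hom2 (fun v => hh b (s v))) as [phi [Hp Hn]].
    exists phi. split; auto. rewrite (sat2 M1 M2 a b L0 L1 L2 HE TV1 TV2 HL); auto.
    apply Hp2; auto.
Qed.
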